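(* Let $p$ be a prime, $a\in\mathbb{Q}_p$, and $f:\mathbb{Q}_p\to\mathbb{Q}_p$, $f(x)=x^3+ax^2$. Let $x^{(0)}\in\mathbb{Q}_p$ be a fixed point of $f$. If $x\in\mathbb{Q}_p$ satisfies $$\max\Big\{|3x^{(0)}+a|_p\,|x-x^{(0)}|_p,\ |x-x^{(0)}|_p^2\Big\}<|f'(x^{(0)})|_p,$$ then $$|f(x)-f(x^{(0)})|_p=|f'(x^{(0)})|_p\,|x-x^{(0)}|_p.$$
   Context: $\mathbb{Q}_p$ is the field of $p$-adic numbers with $p$-adic norm $|\cdot|_p$; $f'(x)=3x^2+2ax$ is the derivative of $f$. *)

(* Defs.v *)
From HB Require Import structures.
From mathcomp Require Import all_boot all_order all_algebra.
From mathcomp Require Import reals.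
Set Implicit Arguments. Unset Strict Implicit. Unset Printing Implicit Defensive.
Import Order.TTheory GRing.Theory Num.Theory.
Local Open Scope ring_scope.

(* (K, nrm) is (an isometric copy of) the field Q_p with |.|_p. *)
Definition is_Qp (p : nat) (K : fieldType) (R : realType) (nrm : K -> R) : Prop :=
  [/\ (forall x, 0 <= nrm x),
      (forall x, nrm x = 0 <-> x = 0),
      (forall x y, nrm (x * y) = nrm x * nrm y),
      (forall x y, nrm (x + y) <= Num.max (nrm x) (nrm y)) &
      nrm (p%:R) = (p%:R)^-1] /\
      (forall (x : K) (e : R), 0 < e -> exists q : rat, nrm (x - ratr q) < e) /\
      (forall u : nat -> K,
         (forall e : R, 0 < e -> exists N : nat,
            forall m n, (N <= m)%N -> (N <= n)%N -> nrm (u m - u n) < e) ->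
         exists l : K, forall e : R, 0 < e -> exists N : nat,
            forall n, (N <= n)%N -> nrm (u n - l) < e).

Definition fcub (K : fieldType) (a x : K) : K := x ^+ 3 + a * x ^+ 2.
Definition fcub' (K : fieldType) (a x : K) : K := 3 * x ^+ 2 + 2 * a * x.

(* Main.v *)
Require Import Defs.
From HB Require Import structures.
From mathcomp Require Import all_boot all_order all_algebra.
From mathcomp Require Import reals.
From mathcomp Require Import ring lra.
Import Order.TTheory GRing.Theory Num.Theory.
Local Open Scope ring_scope.

Theorem lemma4p1 (p : nat) (K : fieldType) (R : realType) (nrm : K -> R)
  (hp : prime p) (hK : is_Qp p nrm) (a x0 x : K) :
  fcub a x0 = x0 ->
  Num.max (nrm (3 * x0 + a) * nrm (x - x0)) (nrm (x - x0) ^+ 2) < nrm (fcub' a x0) ->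
  nrm (fcub a x - fcub a x0) = nrm (fcub' a x0) * nrm (x - x0).
Proof.
move: hK => [[n0 nz nM nD _] _] _ H.
have n1 : nrm 1 = 1.
  have h1 : nrm 1 = nrm 1 * nrm 1 by rewrite -nM mulr1.
  have h2 : nrm 1 != 0 by apply/eqP => /nz /eqP; rewrite oner_eq0.
  by apply: (mulfI h2); rewrite mulr1 -h1.
have nN1 : nrm (-1) = 1.
  have h1 : nrm (-1) * nrm (-1) = 1 by rewrite -nM mulrNN mulr1.
  have := n0 (-1); nra.
have nN : forall y, nrm (- y) = nrm y.
  by move=> y; rewrite -mulN1r nM nN1 mul1r.
have strict : forall u v, nrm v < nrm u -> nrm (u + v) = nrm u.
  move=> u v huv; apply/eqP; rewrite eq_le; apply/andP; split.
    by apply: le_trans (nD u v) _; rewrite ge_max lexx ltW.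
  have := nD (u + v) (- v); rewrite nN addrK.
  move=> h; move: h; rewrite le_max => /orP [//|h].
  by move: (lt_le_trans huv h); rewrite ltxx.
have -> : fcub a x - fcub a x0 = (x - x0) * (fcub' a x0 + ((3 * x0 + a) * (x - x0) + (x - x0) ^+ 2)).
  by rewrite /fcub /fcub'; ring.
rewrite nM (strict (fcub' a x0)); first by rewrite mulrC.
apply: le_lt_trans (nD _ _) _.
by rewrite nM expr2 nM -expr2.
Qed.
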